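(* Let $\lambda \in [0,1]$ and let $L$ be a PLD realization. Define $\phi_{\lambda}(l) \coloneqq \ln\!\left(1 + (e^{l}-1)/\lambda\right)$ and define two random variables $\varphi^{\mathrm{rem}}_{\lambda}(L)$ and $\varphi^{\mathrm{add}}_{\lambda}(L)$ through their probability mass functions: for every $l \in [-\infty,\infty]$, \[ f_{\varphi^{\mathrm{rem}}_{\lambda}(L)}(l) \coloneqq \lambda\, f_{L}\big(\phi_{\lambda}(l)\big) + (1-\lambda)\, f_{-\widetilde{L}}\big(\phi_{\lambda}(l)\big), \qquad f_{\varphi^{\mathrm{add}}_{\lambda}(L)}(l) \coloneqq f_{L}\big(-\phi_{\lambda}(-l)\big), \] where $\widetilde{L}$ is the PLD dual of $L$ and $f_{-\widetilde{L}}(x) = f_{\widetilde{L}}(-x)$. Then for any two discrete distributions $P, Q$ on a common domain, with $P_{\lambda} \coloneqq \lambda P + (1-\lambda) Q$, we have that $\mathcal{L}_{P_{\lambda}/Q}$ is distributed as $\varphi^{\mathrm{rem}}_{\lambda}(\mathcal{L}_{P/Q})$ and $\mathcal{L}_{Q/P_{\lambda}}$ is distributed as $\varphi^{\mathrm{add}}_{\lambda}(\mathcal{L}_{Q/P})$.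
   Context: Privacy loss random variable: for distributions $P,Q$ on a domain $\Omega$, $\mathcal{L}_{P/Q}$ is the random variable $\ln\big(P(\omega)/Q(\omega)\big)$ with $\omega \sim P$ (taking values in $[-\infty,\infty]$); its distribution is the privacy loss distribution (PLD). A discrete random variable $L$ on $[-\infty,\infty]$ with PMF $f_L$ is a PLD realization if $\mathbb{E}[e^{-L}] \le 1$ and $f_L(-\infty) = 0$. The PLD dual of a PLD realization $L$ is the random variable $\widetilde{L}$ with PMF $f_{\widetilde{L}}(l) = f_L(-l)\, e^{l}$ for finite $l$ and with an atom at $+\infty$ of mass $f_{\widetilde{L}}(\infty) \coloneqq 1 - \mathbb{E}[e^{-L}]$. *)

(* Defs.v *)
From HB Require Import structures.
From mathcomp Require Import all_boot all_order all_algebra.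
From mathcomp Require Import all_classical all_reals all_analysis.
Set Implicit Arguments. Unset Strict Implicit. Unset Printing Implicit Defensive.
Import Order.TTheory GRing.Theory Num.Theory.
Local Open Scope classical_set_scope.
Local Open Scope ring_scope.

Section PLD.
Context {R : realType}.

(* A PMF of a discrete random variable on [-oo, +oo] is f : \bar R -> R. *)

(* Privacy loss value ln(P w / Q w) in [-oo,+oo] (with ln(a/0) = +oo for a > 0
   and ln(0/b) = -oo; the point P w = Q w = 0 has P-mass 0 and is irrelevant). *)
Definition ploss {Omega : Type} (P Q : Omega -> R) (w : Omega) : \bar R :=
  if Q w == 0 then +oo%E
  else if P w == 0 then -oo%E
  else (ln (P w / Q w))%:E.

Definition pld_pmf {Omega : choiceType} (P Q : Omega -> R) (l : \bar R) : R :=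
  fine (\esum_(w in [set w | ploss P Q w = l]) (P w)%:E).

Definition exp_neg_mean (f : \bar R -> R) : \bar R :=
  \esum_(l in [set: \bar R]) ((f l)%:E * expeR (- l))%E.

Definition dual_pmf (f : \bar R -> R) (l : \bar R) : R :=
  match l with
  | r%:E => f (- r)%:E * expR r
  | +oo%E => fine (1%E - exp_neg_mean f)%E
  | -oo%E => 0
  end.

Definition neg_pmf (f : \bar R -> R) (l : \bar R) : R := f (- l)%E.

Definition phi_arg (lam : R) (r : R) : R := 1 + (expR r - 1) / lam.

(* ln on [0, +oo) with ln 0 = -oo; None when the argument is negative
   (phi_lam(l) is then undefined). *)
Definition lnE_opt (x : R) : option (\bar R) :=
  if 0 < x then Some (ln x)%:E
  else if x == 0 then Some (-oo)%E
  else None.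

Definition phi (lam : R) (l : \bar R) : option (\bar R) :=
  match l with
  | +oo%E => Some +oo%E
  | r%:E => lnE_opt (phi_arg lam r)
  | -oo%E => lnE_opt (1 - lam^-1)
  end.

Definition pmf_at (f : \bar R -> R) (o : option (\bar R)) : R :=
  if o is Some x then f x else 0.

Definition rem_pmf (lam : R) (f : \bar R -> R) (l : \bar R) : R :=
  lam * pmf_at f (phi lam l) + (1 - lam) * pmf_at (neg_pmf (dual_pmf f)) (phi lam l).

Definition add_pmf (lam : R) (f : \bar R -> R) (l : \bar R) : R :=
  pmf_at (neg_pmf f) (phi lam (- l)%E).

End PLD.

(* Main.v *)
Require Import Defs.
From HB Require Import structures.
From mathcomp Require Import all_boot all_order all_algebra.
From mathcomp Require Import all_classical all_reals all_analysis.
Import Order.TTheory GRing.Theory Num.Theory.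
Local Open Scope classical_set_scope.
Local Open Scope ring_scope.

Section H.
Context {R : realType} {T : choiceType}.

Lemma esumZ (A : set T) (a : T -> \bar R) (r : R) :
  (forall i, (0 <= a i)%E) -> 0 <= r ->
  (\esum_(i in A) (r%:E * a i) = r%:E * \esum_(i in A) a i)%E.
Proof.
move=> a0 r0; rewrite /esum -ereal_supZl //; last first.
  by apply/set0P; exists (\sum_(x \in set0) a x)%E; exists set0 => //; exact: fsets_set0.
congr ereal_sup; apply/seteqP; split=> x /=.
  by move=> [F FA <-]; exists (\sum_(i \in F) a i)%E; [exists F|rewrite ge0_mule_fsumr].
by move=> [y [F FA <-] <-]; exists F => //; rewrite ge0_mule_fsumr.
Qed.

Lemma esum_eq_on (A B : set T) (g : T -> R) :
  (forall w, g w != 0 -> (A w <-> B w)) ->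
  \esum_(w in A) (g w)%:E = \esum_(w in B) (g w)%:E.
Proof.
move=> H; rewrite esum_mkcond [RHS]esum_mkcond; apply: eq_esum => w _.
have [->|gw] := eqVneq (g w) 0; first by do 2 case: ifP.
have := H w gw => -[HA HB].
case: ifPn => Aw; case: ifPn => Bw //.
- by exfalso; move: Bw; rewrite notin_setE; apply; apply: HA; move: Aw; rewrite in_setE.
- by exfalso; move: Aw; rewrite notin_setE; apply; apply: HB; move: Bw; rewrite in_setE.
Qed.

Lemma esum_fin (g : T -> R) (A : set T) :
  (forall w, 0 <= g w) -> \esum_(w in [set: T]) (g w)%:E = 1%E ->
  \esum_(w in A) (g w)%:E \is a fin_num /\ (0 <= \esum_(w in A) (g w)%:E <= 1)%E.
Proof.
move=> g0 g1.
have h0 : (0 <= \esum_(w in A) (g w)%:E)%E by apply: esum_ge0 => w _; rewrite lee_fin.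
have h1 : (\esum_(w in A) (g w)%:E <= 1)%E.
  rewrite -g1 esum_mkcond; apply: le_esum => w _; case: ifP => _ //.
  by rewrite lee_fin.
split; last by rewrite h0 h1.
by rewrite ge0_fin_numE // (le_lt_trans h1) // ltry.
Qed.

Lemma ploss_finE (X Y : T -> R) w (r : R) : 0 <= X w -> 0 <= Y w ->
  (ploss X Y w = r%:E) <-> (Y w != 0 /\ X w = expR r * Y w).
Proof.
move=> X0 Y0; rewrite /ploss.
have [Yw|Yw] := eqVneq (Y w) 0; first by split => // -[].
have [Xw|Xw] := eqVneq (X w) 0.
  split => // -[_]; rewrite Xw => /esym/eqP; by rewrite mulf_eq0 expR_eq0 (negPf Yw).
have Yp : 0 < Y w by rewrite lt_neqAle eq_sym Yw.
have Xp : 0 < X w by rewrite lt_neqAle eq_sym Xw.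
split.
  move=> [<-]; split => //; rewrite lnK ?posrE ?divr_gt0 //.
  by rewrite divfK.

move=> [_ ->]; congr (_%:E); rewrite mulfK // expRK //.
Qed.

Lemma ploss_inf (X Y : T -> R) w : ploss X Y w = +oo%E <-> Y w = 0.
Proof.
rewrite /ploss; case: (eqVneq (Y w) 0) => // Yw.
by case: (eqVneq (X w) 0) => _; split => // /eqP; rewrite (negPf Yw).
Qed.

Lemma ploss_ninf (X Y : T -> R) w : ploss X Y w = -oo%E <-> (Y w != 0 /\ X w = 0).
Proof.
rewrite /ploss; case: (eqVneq (Y w) 0) => [Yw|Yw]; first by split => // -[]; move/eqP.
by case: (eqVneq (X w) 0) => Xw; split => // -[_ /eqP]; rewrite (negPf Xw).
Qed.

End H.

From mathcomp Require Import ring lra.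

Section H2.
Context {R : realType} {T : choiceType}.

Lemma exp_neg_meanE (P Q : T -> R) : (forall w, 0 <= P w) ->
  \esum_(w in [set: T]) (P w)%:E = 1%E -> (forall w, 0 <= Q w) ->
  exp_neg_mean (pld_pmf P Q) =
  \esum_(w in [set: T]) (if P w == 0 then 0 else Q w)%:E.
Proof.
move=> P0 P1 Q0; rewrite /exp_neg_mean.
have Q'0 : forall w, 0 <= (if P w == 0 then 0 else Q w) by move=> w; case: ifP.
transitivity (\esum_(l in [set: \bar R]) \esum_(w in [set w | ploss P Q w = l])
   (if P w == 0 then 0 else Q w)%:E).
  apply: eq_esum => l _; case: l => [s| |] /=.
  - rewrite /pld_pmf fineK; last by case: (@esum_fin _ _ P [set w | ploss P Q w = s%:E] P0 P1).
    rewrite muleC -esumZ; last 2 first.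
      by move=> w; rewrite lee_fin.
      by rewrite expR_ge0.
    apply: eq_esum => w /= /(ploss_finE _ _ _ _ (P0 w) (Q0 w)) [Qw ->].
    rewrite mulf_eq0 expR_eq0 (negPf Qw) -EFinM mulrA -expRD addNr expR0 mul1r //.
  - rewrite mule0 esum1 // => w /= /ploss_inf ->; by case: ifP.
  - rewrite /pld_pmf esum1 ?mul0e ?esum1 //.
    + by move=> w /= /ploss_ninf [_ ->]; rewrite eqxx.
    + by move=> w /= /ploss_ninf [_ ->].
rewrite esum_esum; last by move=> i j _ _; rewrite lee_fin.
rewrite (@reindex_esum _ _ _ [set: T] _ (fun w => (ploss P Q w, w))) //.
split.
- by move=> w _ /=; split.
- by move=> x y _ _ [].
- by move=> [l w] [_ /= H]; exists w => //; rewrite H.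
Qed.

Lemma lnE_opt_lam (lam : R) : 0 < lam -> lam <= 1 ->
  lnE_opt (1 - lam^-1) = if lam == 1 then Some (-oo)%E else None.
Proof.
move=> l0 l1; rewrite /lnE_opt.
have h : 1 - lam^-1 <= 0 by rewrite subr_le0 invf_ge1.
rewrite ltNge h /=.
case: (eqVneq lam 1) => [->|ln1]; first by rewrite invr1 subrr eqxx.
rewrite subr_eq0 eq_sym; case: eqP => // H; exfalso; move/eqP: ln1; apply.
by rewrite -[lam]invrK H invr1.
Qed.

End H2.
Theorem mainTheorem1 (R : realType) (Omega : choiceType) (lam : R)
  (P Q : Omega -> R) :
  0 < lam <= 1 ->
  (forall w, 0 <= P w) -> (\esum_(w in [set: Omega]) (P w)%:E = 1%E) ->
  (forall w, 0 <= Q w) -> (\esum_(w in [set: Omega]) (Q w)%:E = 1%E) ->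
  let Plam := fun w => lam * P w + (1 - lam) * Q w in
  (forall l : \bar R, pld_pmf Plam Q l = rem_pmf lam (pld_pmf P Q) l) /\
  (forall l : \bar R, pld_pmf Q Plam l = add_pmf lam (pld_pmf Q P) l).
Proof.
move=> /andP[lam0 lam1] P0 P1 Q0 Q1 Plam.
have lamn0 : lam != 0 by rewrite gt_eqF.
have Pl0 : forall w, 0 <= Plam w.
  by move=> w; rewrite /Plam addr_ge0 // mulr_ge0 // ?subr_ge0 // ltW.
have finQ A : \esum_(w in A) (Q w)%:E \is a fin_num by case: (@esum_fin _ _ Q A Q0 Q1).
have finP A : \esum_(w in A) (P w)%:E \is a fin_num by case: (@esum_fin _ _ P A P0 P1).
have pld_ninf : forall X Y : Omega -> R, pld_pmf X Y -oo = 0.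
  by move=> X Y; rewrite /pld_pmf esum1 // => w /ploss_ninf [_ ->].
split.
- case=> [r| |].
  + rewrite /rem_pmf /=; set a := phi_arg lam r.
    set S := [set w | Q w != 0 /\ P w = a * Q w].
    have hS : [set w | ploss Plam Q w = r%:E] = S.
      apply/seteqP; split=> w /=; rewrite ploss_finE // => -[Qw H]; split => //.
        have -> : P w = (Plam w - (1 - lam) * Q w) / lam by rewrite /Plam; field.
        by rewrite H /a /phi_arg; field.
      by rewrite /Plam H /a /phi_arg; field.
    have -> : pld_pmf Plam Q r%:E = expR r * fine (\esum_(w in S) (Q w)%:E).
      rewrite /pld_pmf hS (eq_esum (b := fun w => ((expR r)%:E * (Q w)%:E)%E)).
        by rewrite esumZ ?expR_ge0 // ?fineM //; move=> w; rewrite lee_fin.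
      move=> w [Qw Pw]; rewrite -EFinM /Plam Pw /a /phi_arg; congr (_%:E); by field.
    set q := fine (\esum_(w in S) (Q w)%:E).
    rewrite /lnE_opt; have [a_gt0|a_le0] := ltP 0 a.
      rewrite /= /neg_pmf /= opprK.
      have -> : pld_pmf P Q (ln a)%:E = a * q.
        rewrite /pld_pmf (_ : [set w | ploss P Q w = (ln a)%:E] = S); last first.
          by apply/seteqP; split=> w /=; rewrite ploss_finE // lnK ?posrE.
        rewrite (eq_esum (b := fun w => (a%:E * (Q w)%:E)%E)); last first.
          by move=> w [_ ->].
        by rewrite esumZ ?fineM // ?ltW //; move=> w; rewrite lee_fin.
      rewrite expRN lnK ?posrE // /a /phi_arg.
      have an0 : phi_arg lam r != 0 by rewrite gt_eqF.
      move: an0; rewrite /phi_arg => an0.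
      by rewrite mulrAC mulfV // mul1r; field.
    case: (eqVneq a 0) => [a0|an0] /=; last first.
      rewrite !mulr0 addr0 /q esum1 ?mulr0 // => w [Qw Pw].
      have : 0 < Q w by rewrite lt_neqAle eq_sym Qw Q0.
      have : a < 0 by rewrite lt_neqAle an0.
      move=> h1 h2; have h3 := P0 w; exfalso; nra.
    rewrite /neg_pmf /= pld_ninf mulr0 add0r.
    rewrite exp_neg_meanE //.
    set EQ' := \esum_(w in _) _.
    have EQ'fin : EQ' \is a fin_num.
      rewrite ge0_fin_numE; last by apply: esum_ge0 => w _; rewrite lee_fin; case: ifP.
      apply: (le_lt_trans _ (ltry 1)); rewrite -Q1.
      by apply: le_esum => w _; rewrite lee_fin; case: ifP.
    have H1 : 1%E = (\esum_(w in S) (Q w)%:E + EQ')%E.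
      rewrite -Q1 (esum_mkcond S) /EQ' -esumD; last 2 first.
        by move=> w _; case: ifP => // _; rewrite lee_fin.
        by move=> w _; rewrite lee_fin; case: ifP.
      apply: eq_esum => w _.
      case: (boolP (w \in S)) => [/set_mem [Qw Pw]|/negP HS].
        by rewrite Pw a0 mul0r eqxx adde0.
      have [Pw|Pw] := eqVneq (P w) 0; last by rewrite add0e.
      rewrite add0e; have [Qw|Qw] := eqVneq (Q w) 0; first by rewrite Qw.
      by exfalso; apply: HS; apply: mem_set; split => //; rewrite Pw a0 mul0r.
    rewrite H1 addeK // -/q.
    have : expR r = 1 - lam.
      move: a0; rewrite /a /phi_arg => a0.
      have -> : expR r = lam * (1 + (expR r - 1) / lam) + 1 - lam by field.
      by rewrite a0 mulr0 add0r.
    by move=> ->.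
  + rewrite /rem_pmf /= /neg_pmf /= mulr0 addr0 /pld_pmf.
    have hS : forall X : Omega -> R, [set w | ploss X Q w = +oo%E] = [set w | Q w = 0].
      by move=> X; apply/seteqP; split=> w /= /ploss_inf.
    rewrite !hS (eq_esum (b := fun w => (lam%:E * (P w)%:E)%E)); last first.
      by move=> w /= Qw; rewrite /Plam Qw mulr0 addr0.
    by rewrite esumZ ?fineM // ?ltW //; move=> w; rewrite lee_fin.
  + rewrite /rem_pmf /= lnE_opt_lam //.
    rewrite /pld_pmf esum1 /=; last by move=> w /ploss_ninf [_ ->].
    case: (eqVneq lam 1) => [->|] /=; last by rewrite !mulr0 addr0.
    by rewrite subrr mul0r addr0 -/(pld_pmf P Q -oo) pld_ninf mulr0.
- case=> [r| |].
  + rewrite /add_pmf /=; set a := phi_arg lam (- r).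
    set S := [set w | Q w != 0 /\ P w = a * Q w].
    have -> : pld_pmf Q Plam r%:E = fine (\esum_(w in S) (Q w)%:E).
      rewrite /pld_pmf; congr fine; apply: esum_eq_on => w Qw /=.
      rewrite ploss_finE //; split.
        move=> [Pln H].
        have HP : Plam w = expR (- r) * Q w.
          by rewrite H mulrA -expRD addNr expR0 mul1r.
        split => //.
        have -> : P w = (Plam w - (1 - lam) * Q w) / lam by rewrite /Plam; field.
        by rewrite HP /a /phi_arg; field.
      move=> [_ Pw].
      have HP : Plam w = expR (- r) * Q w.
        by rewrite /Plam Pw /a /phi_arg; field.
      split.
        by rewrite HP mulf_eq0 expR_eq0.
      by rewrite HP mulrA -expRD addrN expR0 mul1r.
    rewrite /lnE_opt; have [a_gt0|a_le0] := ltP 0 a.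
      rewrite /= /neg_pmf /pld_pmf; congr fine; apply: esum_eq_on => w Qw /=.
      rewrite ploss_finE // expRN lnK ?posrE //; split.
        move=> [_ Pw]; rewrite Pw; split.
          by rewrite mulf_eq0 negb_or gt_eqF.
        by rewrite mulrA mulVf ?gt_eqF // mul1r.
      move=> [Pn H]; split=> //.
      by rewrite H mulrA mulfV ?gt_eqF // mul1r.
    case: (eqVneq a 0) => [a0|an0] /=; last first.
      rewrite esum1 // => w [Qw Pw].
      move: (P0 w) (Q0 w) => h1 h2.
      have h3 : 0 < Q w by rewrite lt_neqAle eq_sym Qw h2.
      have h4 : a < 0 by rewrite lt_neqAle an0.
      exfalso; nra.
    rewrite /neg_pmf /= /pld_pmf; congr fine; apply: esum_eq_on => w Qw /=.
    rewrite ploss_inf /S /= a0 mul0r; split; first by move=> [].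
    by move=> ?; split.
  + rewrite /add_pmf /= lnE_opt_lam //.
    case: (eqVneq lam 1) => [l1|ln1] /=.
      rewrite /neg_pmf /= /pld_pmf; congr fine; apply: esum_eq_on => w Qw /=.
      rewrite !ploss_inf /Plam l1 subrr mul0r addr0 mul1r //.
    rewrite /pld_pmf esum1 // => w /ploss_inf.
    rewrite /Plam => /eqP; rewrite paddr_eq0; last 2 first.
      by rewrite mulr_ge0 // ltW.
      by rewrite mulr_ge0 // subr_ge0.
    case/andP=> _; rewrite mulf_eq0 subr_eq0 eq_sym (negPf ln1) /= => /eqP -> //.
  + rewrite /add_pmf /= /neg_pmf /= pld_ninf.
    by rewrite /pld_pmf esum1 // => w /ploss_ninf [_ ->].
Qed.
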